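(* Let $\kappa,\lambda,\mu,\ell\in\mathbb{R}$ and $F(R)=\bigl(h-\lambda R-\tfrac{\kappa}{2}R^2\bigr)^2-(R^2-\mu^2)(R-\ell)$. (i) Let $\mu=0$, $\ell<0$ (so $R_{\min}=0$). There exists $h\in\mathbb{R}$ such that $R=0$ is a root of $F$ of multiplicity at least three if and only if $\ell=-\lambda^2$ (with $\lambda\ne0$). In that case $h=0$ and $F(R)=R^3\bigl(\kappa\lambda-1+\tfrac{\kappa^2}{4}R\bigr)$, so $F'''(0)=6(\kappa\lambda-1)$. (ii) Let $\ell=|\mu|>0$ (so $R_{\min}=\ell$). There exists $h$ such that $R=\ell$ is a root of $F$ of multiplicity at least three if and only if $(\lambda+\kappa\ell)^2=2\ell$. In that case $h=\lambda\ell+\tfrac{\kappa}{2}\ell^2$ and $F(R)=(R-\ell)^3\bigl(\kappa(\lambda+\kappa\ell)-1+\tfrac{\kappa^2}{4}(R-\ell)\bigr)$, so $F'''(\ell)=6\bigl(\kappa(\lambda+\kappa\ell)-1\bigr)$. (iii) Consequently, for $\kappa\ne0$, the root $R_{\min}$ has multiplicity exactly four (degenerate Hamiltonian Hopf bifurcation) precisely at $(\lambda,\mu,\ell)=(1/\kappa,0,-1/\kappa^2)$ and $(\lambda,\mu,\ell)=(1/(2\kappa),\pm1/(2\kappa^2),1/(2\kappa^2))$. (iv) For $\kappa=1$: the Hamiltonian Hopf set with $\mu=0,\ell<0$ is $\{(\lambda,0,-\lambda^2):\lambda\ne0\}$, subcritical ($F'''(0)<0$) for $\lambda<1$ and supercritical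 ($F'''(0)>0$) for $\lambda>1$; the Hamiltonian Hopf set with $\ell=|\mu|>0$ consists of the points $(\lambda,\pm\ell,\ell)$ with $\lambda\le\tfrac12$ and $\ell=1-\lambda\pm\sqrt{1-2\lambda}>0$, where $F'''(\ell)=\pm6\sqrt{1-2\lambda}$, so the branch $\ell=1-\lambda-\sqrt{1-2\lambda}$ ($\lambda<\tfrac12$, $\lambda\neq0$) is subcritical and the branch $\ell=1-\lambda+\sqrt{1-2\lambda}$ ($\lambda<\tfrac12$) is supercritical, the two meeting at the degenerate point $(\tfrac12,\pm\tfrac12,\tfrac12)$.
   Context: $R_{\min}=\max(|\mu|,\ell)$. A Hamiltonian Hopf bifurcation of the reduced system (energy $\mathcal{H}_\lambda=X+\lambda R+\tfrac{\kappa}{2}R^2$ on $\mathcal{P}_{\mu\ell}=\{R\ge R_{\min},\,X^2+Y^2=(R^2-\mu^2)(R-\ell)\}$, which is singular at its tip $(R_{\min},0,0)$ exactly when $\ell=|\mu|$ or $\mu=0,\ell\le0$) is characterised by $F$ having a root of multiplicity at least three at $R=R_{\min}$; it is called supercritical if $F'''(R_{\min})>0$, subcritical if $F'''(R_{\min})<0$, and degenerate if $F'''(R_{\min})=0$. *)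

(* Defs.v *)
(* the statement is purely algebraic (polynomial identities,
   divisibility, signs, square roots), so it is stated over an arbitrary
   real closed field R (which includes the real numbers). *)
From HB Require Import structures.
From mathcomp Require Import all_boot all_order all_algebra.
Set Implicit Arguments. Unset Strict Implicit. Unset Printing Implicit Defensive.
Import Order.TTheory GRing.Theory Num.Theory.
Local Open Scope ring_scope.

Definition Fpoly (R : rcfType) (k l m ell h : R) : {poly R} :=
  (h%:P - l%:P * 'X - (k / 2)%:P * 'X^2) ^+ 2
  - ('X^2 - (m ^+ 2)%:P) * ('X - ell%:P).

Definition root_mult_ge (R : rcfType) (n : nat) (p : {poly R}) (x : R) : Prop :=
  ('X - x%:P) ^+ n %| p.

Definition root_mult_eq (R : rcfType) (n : nat) (p : {poly R}) (x : R) : Prop :=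
  root_mult_ge n p x /\ ~ root_mult_ge n.+1 p x.

Definition Rmin (R : rcfType) (m ell : R) : R := Num.max `|m| ell.

(* Main.v *)
Require Import Defs.
From HB Require Import structures.
From mathcomp Require Import all_boot all_order all_algebra.
From mathcomp Require Import ring lra.
Import Order.TTheory GRing.Theory Num.Theory.
Local Open Scope ring_scope.

Lemma Fexp (R : rcfType) (k l m ell h x : R) :
  Fpoly k l m ell h =
   ((h - l * x - k / 2 * x ^+ 2) ^+ 2 - (x ^+ 2 - m ^+ 2) * (x - ell))%:P + ('X - x%:P) * (
   (- 2 * (h - l * x - k / 2 * x ^+ 2) * (l + k * x) - (x ^+ 2 - m ^+ 2) - 2 * x * (x - ell))%:P + ('X - x%:P) * (
   ((l + k * x) ^+ 2 - k * (h - l * x - k / 2 * x ^+ 2) - (3 * x - ell))%:P + ('X - x%:P) * (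
   (k * (l + k * x) - 1)%:P + ('X - x%:P) * ((k / 2) ^+ 2)%:P))).
Proof.
rewrite /Fpoly.
have hk : k = 2 * (k / 2) by rewrite mulrC divfK // pnatr_eq0.
move: (k / 2) hk => q ->.
rewrite !(polyCD, polyCM, polyCN, polyCB, rmorphXn). ring. Qed.
Lemma d3 (R : rcfType) (x : R) (r : {poly R}) :
  (('X - x%:P) ^+ 3 * r)^`(3).[x] = 6 * r.[x].
Proof.
have dY : forall q : {poly R}, (('X - x%:P) * q)^`() = q + ('X - x%:P) * q^`().
  by move=> q; rewrite derivM derivXsubC mul1r.
rewrite /= !exprS expr0 mulr1 -!mulrA.
rewrite !(dY, derivD) !(hornerD, hornerM, hornerXsubC, hornerX, hornerN, hornerC) subrr.
ring.
Qed.

Lemma dvdL (R : rcfType) (x c : R) (n : nat) (q : {poly R}) :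
  (('X - x%:P) ^+ n.+1 %| c%:P + ('X - x%:P) * q) = (c == 0) && (('X - x%:P) ^+ n %| q).
Proof.
have Y0 : 'X - x%:P != 0 by rewrite polyXsubC_eq0.
have [->|c0] := eqVneq c 0.
  by rewrite add0r exprS dvdp_mul2l.
apply/negbTE/negP => H.
have : ('X - x%:P) %| c%:P + ('X - x%:P) * q.
  by apply: dvdp_trans H; rewrite exprS dvdp_mulr.
rewrite dvdp_addl ?dvdp_mulr // dvdp_XsubCl rootC.
by rewrite (negbTE c0).
Qed.

Section S.
Variable R : rcfType.
Notation Y x := ('X - (x : R)%:P).

Lemma gen3 (x c0 c1 c2 c3 c4 : R) :
  (Y x ^+ 3 %| c0%:P + Y x * (c1%:P + Y x * (c2%:P + Y x * (c3%:P + Y x * c4%:P))))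
   = [&& c0 == 0, c1 == 0 & c2 == 0].
Proof. by rewrite !dvdL !expr0 !dvd1p !andbT. Qed.
Lemma gen4 (x c0 c1 c2 c3 c4 : R) :
  (Y x ^+ 4 %| c0%:P + Y x * (c1%:P + Y x * (c2%:P + Y x * (c3%:P + Y x * c4%:P))))
   = [&& c0 == 0, c1 == 0, c2 == 0 & c3 == 0].
Proof. by rewrite !dvdL !expr0 !dvd1p !andbT. Qed.
Lemma gen5 (x c0 c1 c2 c3 c4 : R) :
  (Y x ^+ 5 %| c0%:P + Y x * (c1%:P + Y x * (c2%:P + Y x * (c3%:P + Y x * c4%:P))))
   = [&& c0 == 0, c1 == 0, c2 == 0, c3 == 0 & c4 == 0].
Proof. by rewrite !dvdL expr1 dvdp_XsubCl rootC. Qed.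

Lemma k4 (k : R) : k ^+ 2 / 4 = (k / 2) ^+ 2.
Proof. by rewrite expr_div_n -natrX. Qed.

Lemma multA3 (k l ell h : R) :
  root_mult_ge 3 (Fpoly k l 0 ell h) 0 <-> h = 0 /\ ell = - l ^+ 2.
Proof.
rewrite /root_mult_ge (@Fexp _ _ _ _ _ _ 0) gen3.
split => [/and3P[/eqP E0 /eqP E1 /eqP E2] | [-> ->]].
  have : h ^+ 2 == 0 by rewrite -E0; apply/eqP; ring.
  rewrite sqrf_eq0 => /eqP h0; split => //.
  apply/eqP; rewrite -subr_eq0 -E2 h0; apply/eqP; ring.
by apply/and3P; split; apply/eqP; ring.
Qed.

Lemma formA (k l ell h : R) : h = 0 -> ell = - l ^+ 2 ->
  Fpoly k l 0 ell h = 'X^3 * ((k * l - 1)%:P + (k ^+ 2 / 4)%:P * 'X).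
Proof.
move=> -> ->; rewrite (@Fexp _ _ _ _ _ _ 0) k4.
have hk : k = 2 * (k / 2) by rewrite mulrC divfK // pnatr_eq0.
move: (k / 2) hk => q ->.
rewrite !(polyCD, polyCM, polyCN, polyCB, rmorphXn). ring.
Qed.


Lemma multB3 (k l m ell h : R) : m ^+ 2 = ell ^+ 2 ->
  root_mult_ge 3 (Fpoly k l m ell h) ell <->
  h = l * ell + k / 2 * ell ^+ 2 /\ (l + k * ell) ^+ 2 = 2 * ell.
Proof.
move=> hm; rewrite /root_mult_ge (@Fexp _ _ _ _ _ _ ell) hm gen3.
split => [/and3P[/eqP E0 /eqP E1 /eqP E2] | [-> E]].
  have : (h - l * ell - k / 2 * ell ^+ 2) ^+ 2 == 0 by rewrite -E0; apply/eqP; ring.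
  rewrite sqrf_eq0 => /eqP g0; split.
    apply/eqP; rewrite -subr_eq0 -g0; apply/eqP; ring.
  apply/eqP; rewrite -subr_eq0 -E2 g0; apply/eqP; ring.
apply/and3P; split; apply/eqP; first ring; first ring.
rewrite E; ring.
Qed.

Lemma formB (k l m ell h : R) : m ^+ 2 = ell ^+ 2 ->
  h = l * ell + k / 2 * ell ^+ 2 -> (l + k * ell) ^+ 2 = 2 * ell ->
  Fpoly k l m ell h = ('X - ell%:P) ^+ 3 *
     ((k * (l + k * ell) - 1)%:P + (k ^+ 2 / 4)%:P * ('X - ell%:P)).
Proof.
move=> hm -> E; rewrite (@Fexp _ _ _ _ _ _ ell) hm k4 E.
have hk : k = 2 * (k / 2) by rewrite mulrC divfK // pnatr_eq0.
move: (k / 2) hk => q ->.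
rewrite !(polyCD, polyCM, polyCN, polyCB, rmorphXn). ring.
Qed.

Lemma eq4 (k l m ell h x : R) :
  root_mult_eq 4 (Fpoly k l m ell h) x <->
  root_mult_ge 3 (Fpoly k l m ell h) x /\ k * (l + k * x) = 1 /\ k != 0.
Proof.
rewrite /root_mult_eq /root_mult_ge (@Fexp _ _ _ _ _ _ x) gen3 gen4 gen5.
split => [[/and4P[a b c /eqP d] H]|[/and3P[a b c] [d k0]]].
  split; first by apply/and3P.
  split; first by apply/eqP; rewrite -subr_eq0 d.
  apply/negP => /eqP k0; apply: H; apply/and5P; split => //; first by rewrite d.
  by rewrite k0 mul0r expr2 mulr0.
split; first by apply/and4P; split => //; rewrite d subrr.
move=> /and5P[_ _ _ _]; rewrite sqrf_eq0 mulf_eq0 invr_eq0 pnatr_eq0 orbF.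
by rewrite (negbTE k0).
Qed.

Lemma der3 (x : R) (p r : {poly R}) : p = ('X - x%:P) ^+ 3 * r ->
  p^`(3).[x] = 6 * r.[x].
Proof. by move=> ->; rewrite d3. Qed.

End S.

Theorem mainTheorem6 (R : rcfType) :
  (* (i) mu = 0, ell < 0 *)
  (forall k l ell : R, ell < 0 ->
     ((exists h : R, root_mult_ge 3 (Fpoly k l 0 ell h) 0)
        <-> (ell = - l ^+ 2 /\ l != 0))
     /\ (forall h : R, root_mult_ge 3 (Fpoly k l 0 ell h) 0 ->
          [/\ h = 0,
              Fpoly k l 0 ell h
                = 'X^3 * ((k * l - 1)%:P + (k ^+ 2 / 4)%:P * 'X)
            & (Fpoly k l 0 ell h)^`(3).[0] = 6 * (k * l - 1)]))
  /\
  (* (ii) ell = |mu| > 0 *)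
  (forall k l m ell : R, ell = `|m| -> 0 < ell ->
     ((exists h : R, root_mult_ge 3 (Fpoly k l m ell h) ell)
        <-> (l + k * ell) ^+ 2 = 2 * ell)
     /\ (forall h : R, root_mult_ge 3 (Fpoly k l m ell h) ell ->
          [/\ h = l * ell + k / 2 * ell ^+ 2,
              Fpoly k l m ell h
                = ('X - ell%:P) ^+ 3 *
                  ((k * (l + k * ell) - 1)%:P + (k ^+ 2 / 4)%:P * ('X - ell%:P))
            & (Fpoly k l m ell h)^`(3).[ell] = 6 * (k * (l + k * ell) - 1)]))
  /\
  (* (iii) degenerate points, kappa <> 0 *)
  (forall k l m ell : R, k != 0 ->
     ((m = 0 /\ ell < 0) \/ (ell = `|m| /\ 0 < ell)) ->
     ((exists h : R, root_mult_eq 4 (Fpoly k l m ell h) (Rmin m ell))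
        <-> ((l = 1 / k /\ m = 0 /\ ell = - 1 / k ^+ 2)
             \/ (l = 1 / (2 * k) /\ (m = 1 / (2 * k ^+ 2) \/ m = - (1 / (2 * k ^+ 2)))
                 /\ ell = 1 / (2 * k ^+ 2)))))
  /\
  (* (iv) kappa = 1 *)
  ((forall l ell : R, ell < 0 ->
      ((exists h : R, root_mult_ge 3 (Fpoly 1 l 0 ell h) 0)
         <-> (ell = - l ^+ 2 /\ l != 0))
      /\ (forall h : R, root_mult_ge 3 (Fpoly 1 l 0 ell h) 0 ->
           (l < 1 -> (Fpoly 1 l 0 ell h)^`(3).[0] < 0)
           /\ (1 < l -> 0 < (Fpoly 1 l 0 ell h)^`(3).[0])))
   /\
   (forall l m ell : R, ell = `|m| -> 0 < ell ->
      ((exists h : R, root_mult_ge 3 (Fpoly 1 l m ell h) ell)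
         <-> (l <= 1 / 2 /\
              (ell = 1 - l + Num.sqrt (1 - 2 * l) \/
               ell = 1 - l - Num.sqrt (1 - 2 * l))))
      /\ (forall h : R, root_mult_ge 3 (Fpoly 1 l m ell h) ell ->
           (ell = 1 - l + Num.sqrt (1 - 2 * l) ->
              (Fpoly 1 l m ell h)^`(3).[ell] = 6 * Num.sqrt (1 - 2 * l)
              /\ (l < 1 / 2 -> 0 < (Fpoly 1 l m ell h)^`(3).[ell]))
           /\
           (ell = 1 - l - Num.sqrt (1 - 2 * l) ->
              (Fpoly 1 l m ell h)^`(3).[ell] = - (6 * Num.sqrt (1 - 2 * l))
              /\ (l < 1 / 2 -> l != 0 /\ (Fpoly 1 l m ell h)^`(3).[ell] < 0))))
   /\
   (* the two branches meet at the degenerate point (1/2, +-1/2, 1/2) *)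
   (forall m : R, `|m| = 1 / 2 ->
      (1 / 2 = 1 - 1 / 2 + Num.sqrt (1 - 2 * (1 / 2)) :> R)
      /\ (1 / 2 = 1 - 1 / 2 - Num.sqrt (1 - 2 * (1 / 2)) :> R)
      /\ (exists h : R, root_mult_ge 3 (Fpoly 1 (1 / 2) m (1 / 2) h) (1 / 2))
      /\ (forall h : R, root_mult_ge 3 (Fpoly 1 (1 / 2) m (1 / 2) h) (1 / 2) ->
            (Fpoly 1 (1 / 2) m (1 / 2) h)^`(3).[1 / 2] = 0))).
Proof.
have dA : forall k l ell h : R, h = 0 -> ell = - l ^+ 2 ->
    (Fpoly k l 0 ell h)^`(3).[0] = 6 * (k * l - 1).
  move=> k l ell h h0 E; rewrite (@der3 R 0 _ ((k * l - 1)%:P + (k ^+ 2 / 4)%:P * ('X - 0%:P))).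
    by rewrite !hornerE; ring.
  by rewrite formA // polyC0 subr0.
have dB : forall k l m ell h : R, m ^+ 2 = ell ^+ 2 ->
    h = l * ell + k / 2 * ell ^+ 2 -> (l + k * ell) ^+ 2 = 2 * ell ->
    (Fpoly k l m ell h)^`(3).[ell] = 6 * (k * (l + k * ell) - 1).
  move=> k l m ell h hm h0 E; rewrite (@der3 R _ _ _ (@formB R _ _ _ _ _ hm h0 E)).
  by rewrite !hornerE; ring.
have PI : forall k l ell : R, ell < 0 ->
     ((exists h : R, root_mult_ge 3 (Fpoly k l 0 ell h) 0)
        <-> (ell = - l ^+ 2 /\ l != 0))
     /\ (forall h : R, root_mult_ge 3 (Fpoly k l 0 ell h) 0 ->
          [/\ h = 0,
              Fpoly k l 0 ell h
                = 'X^3 * ((k * l - 1)%:P + (k ^+ 2 / 4)%:P * 'X)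
            & (Fpoly k l 0 ell h)^`(3).[0] = 6 * (k * l - 1)]).
  move=> k l ell Hl; split.
    split => [[h /multA3 [h0 E]]|[E _]]; last by exists 0; apply/multA3.
    split => //; apply/eqP => l0; move: Hl; rewrite E l0 expr2 mulr0 oppr0 ltxx //.
  move=> h /multA3 [h0 E]; split => //; first exact: formA.
  exact: dA.
have hmE : forall m ell : R, ell = `|m| -> m ^+ 2 = ell ^+ 2.
  by move=> m ell ->; rewrite real_normK // num_real.
have PII : forall k l m ell : R, ell = `|m| -> 0 < ell ->
     ((exists h : R, root_mult_ge 3 (Fpoly k l m ell h) ell)
        <-> (l + k * ell) ^+ 2 = 2 * ell)
     /\ (forall h : R, root_mult_ge 3 (Fpoly k l m ell h) ell ->
          [/\ h = l * ell + k / 2 * ell ^+ 2,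
              Fpoly k l m ell h
                = ('X - ell%:P) ^+ 3 *
                  ((k * (l + k * ell) - 1)%:P + (k ^+ 2 / 4)%:P * ('X - ell%:P))
            & (Fpoly k l m ell h)^`(3).[ell] = 6 * (k * (l + k * ell) - 1)]).
  move=> k l m ell Hm Hp; have hm := hmE _ _ Hm; split.
    split => [[h /(@multB3 R _ _ _ _ _ hm) [h0 E]] // | E].
    by exists (l * ell + k / 2 * ell ^+ 2); apply/(@multB3 R _ _ _ _ _ hm).
  move=> h /(@multB3 R _ _ _ _ _ hm) [h0 E]; split => //; first exact: formB.
  exact: dB.
split; first exact: PI.
split; first exact: PII.
split.
  move=> k l m ell k0 [[m0 Hl]|[Hm Hp]].
    subst m.
    have -> : Rmin 0 ell = 0.
      by rewrite /Rmin normr0; case: (lerP 0 ell) => //; lra.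
    split.
      move=> [h /eq4 [/multA3 [h0 E] [KL _]]].
      have l1 : l = 1 / k by rewrite -KL; field.
      left; split => //; split => //.
      by rewrite E l1; field.
    move=> [[l1 [m1 e1]]|[l1 [mm e1]]].
      exists 0; apply/eq4; split; first by apply/multA3; split => //; rewrite e1 l1; field.
      by split => //; rewrite l1; field.
    exfalso.
    have H : 1 / (2 * k ^+ 2) * (2 * k ^+ 2) = 1 by field.
    case: mm => mm.
      by move: H; rewrite -mm mul0r => /eqP; rewrite eq_sym oner_eq0.
    by move: H; rewrite -(opprK (1 / (2 * k ^+ 2))) -mm oppr0 mul0r => /eqP; rewrite eq_sym oner_eq0.
  have hm := hmE _ _ Hm.
  have -> : Rmin m ell = ell by rewrite /Rmin -Hm maxxx.
  split.
    move=> [h /eq4 [/(@multB3 R _ _ _ _ _ hm) [h0 E] [KL _]]].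
    have a1 : l + k * ell = 1 / k by rewrite -KL; field.
    have e1 : ell = 1 / (2 * k ^+ 2).
      have : 2 * ell = (1 / k) ^+ 2 by rewrite -E a1.
      by move=> E2; apply: (@mulfI _ 2); [rewrite pnatr_eq0 | rewrite E2; field].
    right; split.
      have -> : l = (l + k * ell) - k * ell by ring.
      by rewrite a1 e1; field.
    split => //.
    move: Hm; case: (ger0P m) => _ Hm.
      by left; rewrite -Hm.
    by right; rewrite -e1 Hm opprK.
  move=> [[l1 [m1 e1]]|[l1 [mm e1]]].
    by move: Hp; rewrite Hm m1 normr0 ltxx.
  exists (l * ell + k / 2 * ell ^+ 2); apply/eq4; split.
    by apply/(@multB3 R _ _ _ _ _ hm); split => //; rewrite l1 e1; field.
  by split => //; rewrite l1 e1; field.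
split.
  move=> l ell Hl; have [A B] := PI 1 l ell Hl; split => // h H.
  have [_ _ ->] := B h H; split => ?; lra.
have sq : forall l : R, l <= 1 / 2 -> Num.sqrt (1 - 2 * l) ^+ 2 = 1 - 2 * l.
  by move=> l Hl; rewrite sqr_sqrtr //; lra.
split.
  move=> l m ell Hm Hp; have [A B] := PII 1 l m ell Hm Hp; split.
    split => [/A E|[Hl EE]].
      have H1 : (ell - (1 - l)) ^+ 2 = 1 - 2 * l by nra.
      have Hl : l <= 1 / 2 by have := sqr_ge0 (ell - (1 - l)); rewrite H1; lra.
      split => //.
      have : (ell - (1 - l) - Num.sqrt (1 - 2 * l)) * (ell - (1 - l) + Num.sqrt (1 - 2 * l)) == 0.
        by apply/eqP; rewrite [LHS](_ : _ = (ell - (1 - l)) ^+ 2 - Num.sqrt (1 - 2 * l) ^+ 2);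
          [rewrite H1 sq // subrr | ring].
      rewrite mulf_eq0 => /orP [/eqP H|/eqP H]; [left|right]; lra.
    apply/A; have := sq _ Hl; case: EE => ->; nra.
  move=> h H; have [_ _ ->] := B h H; split => E.
    split; first by rewrite E; ring.
    move=> Hl; rewrite E.
    have : 0 < Num.sqrt (1 - 2 * l) by rewrite sqrtr_gt0; lra.
    lra.
  split; first by rewrite E; ring.
  move=> Hl; have : 0 < Num.sqrt (1 - 2 * l) by rewrite sqrtr_gt0; lra.
  move=> sp; split; last by rewrite E; lra.
  apply/eqP => l0; move: Hp; rewrite E l0 mulr0 subr0 sqrtr1; lra.
move=> m Hm.
have e0 : 1 - 2 * (1 / 2) = 0 :> R by field.
have Hm' : 1 / 2 = `|m| by [].
have Hp : 0 < 1 / 2 :> R by lra.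
have [A B] := PII 1 (1 / 2) m (1 / 2) Hm' Hp.
split; first by rewrite e0 sqrtr0; field.
split; first by rewrite e0 sqrtr0; field.
split; first by apply/A; field.
by move=> h H; have [_ _ ->] := B h H; field.
Qed.
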